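(* Let $X,X'$ be second countable locally compact Hausdorff spaces, $T'\colon X'\to X'$ a local homeomorphism, $T\colon X\to X$ a continuous locally injective map, and $\pi\colon X'\to X$ a proper continuous surjection with $\pi\circ T'=T\circ\pi$. Then the following are equivalent: (a) there exists $\mathscr X\subseteq X$ with $T^{-1}(\mathscr X)=\mathscr X$ such that $\mathscr X$ is co-meagre in $X$, $\pi^{-1}(\mathscr X)$ is co-meagre in $X'$, and $\pi$ restricts to a bijection $\pi^{-1}(\mathscr X)\to\mathscr X$; (b) the set $X'_0=\{x'\in X':|\pi^{-1}(\pi(x'))|=1\}$ is dense in $X'$.
   Context: A subset is co-meagre if its complement is meagre, i.e. a countable union of sets whose closures have empty interior. *)

(* Defs.v *)
From HB Require Import structures.
From mathcomp Require Import all_boot all_order all_algebra.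
From mathcomp Require Import all_classical all_reals all_analysis.
Set Implicit Arguments. Unset Strict Implicit. Unset Printing Implicit Defensive.
Local Open Scope classical_set_scope.

Definition nowhere_dense (T : topologicalType) (A : set T) : Prop :=
  interior (closure A) = set0.

Definition meagre (T : topologicalType) (A : set T) : Prop :=
  exists F : nat -> set T, (forall n, nowhere_dense (F n)) /\ A = \bigcup_n F n.

Definition comeagre (T : topologicalType) (A : set T) : Prop := meagre (~` A).

Definition local_homeomorphism (S T : topologicalType) (f : S -> T) : Prop :=
  forall x, exists U : set S,
    [/\ open U, U x, open (f @` U), {within U, continuous f} &
        set_inj U f /\ forall V, open V -> V `<=` U -> open (f @` V)].

Definition locally_injective (S T : topologicalType) (f : S -> T) : Prop :=
  forall x, exists U : set S, [/\ open U, U x & set_inj U f].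

Definition proper_map (S T : topologicalType) (f : S -> T) : Prop :=
  forall K : set T, compact K -> compact (f @^-1` K).

(* Main.v *)
Require Import Defs.
From HB Require Import structures.
From mathcomp Require Import all_boot all_order all_algebra.
From mathcomp Require Import all_classical all_reals all_analysis.
Local Open Scope classical_set_scope.
Set Implicit Arguments. Unset Strict Implicit.

Section General.
Variable T : topologicalType.

Definition cnd (A : set T) := closed A /\ interior A = set0.
Definition meagre' (A : set T) :=
  exists C : nat -> set T, (forall n, cnd (C n)) /\ A `<=` \bigcup_n C n.

Lemma cnd0 : cnd set0.
Proof.
split; first exact: closed0.
by apply/seteqP; split => // x /interior_subset.
Qed.

Lemma int0 (A : set T) : interior A = set0 -> forall W, open W -> W `<=` A -> W = set0.
Proof.
move=> h W oW WA; apply/seteqP; split => // x Wx.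
rewrite -h; apply: (interiorS WA); move: oW; rewrite openE; exact.
Qed.

Lemma meagreP (A : set T) : meagre A <-> meagre' A.
Proof.
split.
  move=> [F [nF ->]]; exists (fun n => closure (F n)); split.
    by move=> n; split; [exact: closed_closure| exact: nF].
  by move=> x [n _ Fx]; exists n => //; exact: subset_closure.
move=> [C [cC AC]]; exists (fun n => A `&` C n); split.
  move=> n; rewrite /nowhere_dense.
  have [clC iC] := cC n.
  apply: int0 iC _ (@open_interior _ _) _.
  apply: subset_trans (@interior_subset _ _) _.
  rewrite [X in _ `<=` X](closure_id _).1 //; apply: closureS; exact: subIsetr.
apply/seteqP; split.
  by move=> x Ax; have [n _ Cx] := AC x Ax; exists n.
by move=> x [n _ []].
Qed.

Lemma meagre'_sub (A B : set T) : A `<=` B -> meagre' B -> meagre' A.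
Proof. by move=> AB [C [cC BC]]; exists C; split => // x /AB /BC. Qed.

Lemma meagre'_cnd (A : set T) : cnd A -> meagre' A.
Proof. by move=> cA; exists (fun=> A); split => // x Ax; exists 0%N. Qed.

Lemma meagre'_bigcup (A : nat -> set T) :
  (forall k, meagre' (A k)) -> meagre' (\bigcup_k A k).
Proof.
move=> hA; have [C hC] := choice (fun k => hA k).
pose D j := match choice.unpickle j with Some (k, n) => C k n | None => set0 end.
exists D; split.
  move=> j; rewrite /D; case: (choice.unpickle j) => [[k n]|]; last exact: cnd0.
  exact: (hC k).1.
move=> x [k _ Akx]; have [n _ Cx] := (hC k).2 x Akx.
by exists (choice.pickle (k, n)) => //; rewrite /D choice.pickleK.
Qed.

End General.
Section LCH.
Variable T : topologicalType.
Hypothesis hT : hausdorff_space T.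
Hypothesis lcT : locally_compact [set: T].

Lemma reg_nbhd (x : T) (O : set T) : open O -> O x ->
  exists D, [/\ nbhs x D, closure D `<=` O & compact (closure D)].
Proof.
move=> oO Ox.
have [K Kx [cK clK]] := lcT (I : [set: T] x).
rewrite withinET in Kx.
have := @compact_regular T x K hT cK Kx O (open_nbhs_nbhs (conj oO Ox)).
move=> [D nD cDO]; exists (D `&` K); split.
- exact: filterI.
- by apply: subset_trans cDO; apply: closureS; exact: subIsetl.
- apply: (subclosed_compact (@closed_closure _ _) cK).
  rewrite [X in _ `<=` X](closure_id _).1 //; apply: closureS; exact: subIsetr.
Qed.

Lemma basis_reg (B : set (set T)) : basis B -> forall (x : T) (O : set T), open O -> O x ->
  exists b, [/\ B b, b x, closure b `<=` O & compact (closure b)].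
Proof.
move=> [Bo Bx] x O oO Ox; have [D [nD cDO cD]] := reg_nbhd oO Ox.
have [b [Bb bx] bD] := Bx x D nD.
exists b; split => //.
  by apply: subset_trans cDO; exact: closureS.
by apply: (subclosed_compact (@closed_closure _ _) cD); exact: closureS.
Qed.


Lemma step_lemma (C : nat -> set T) : (forall n, cnd (C n)) ->
  forall n (W : set T), open W -> W !=set0 ->
  exists V, [/\ open V, V !=set0, closure V `<=` W `\` C n & compact (closure V)].
Proof.
move=> cC n W oW [w Ww].
have [clC iC] := cC n.
have oWC : open (W `\` C n) by apply: openI => //; exact: closed_openC.
have [x [Wx nCx]] : (W `\` C n) !=set0.
  apply/set0P/eqP => h.
  have WC : W `<=` C n by move=> y Wy; apply: contrapT => nCy;
    have : (W `\` C n) y by [] ; rewrite h.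
  by have := int0 iC oW WC; move/seteqP => [/(_ w Ww)].
have [D [nD cD cptD]] := reg_nbhd oWC (conj Wx nCx).
exists (interior D); split.
- exact: open_interior.
- by exists x; apply: nbhs_singleton; exact: nbhs_interior.
- by apply: subset_trans cD; apply: closureS; exact: interior_subset.
- apply: (subclosed_compact (@closed_closure _ _) cptD).
  by apply: closureS; exact: interior_subset.
Qed.

Lemma baire_lch (P : set T) : meagre' (~` P) -> dense P.
Proof.
move=> [C [cC PC]] O O0 oO.
have := step_lemma cC.
move=> st.
have ex : forall t : nat * set T, exists V : set T, open t.2 -> t.2 !=set0 ->
     [/\ open V, V !=set0, closure V `<=` t.2 `\` C t.1 & compact (closure V)].
  move=> t; have [ [oW n0] | h] := pselect (open t.2 /\ (t.2 !=set0)).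
    by have [V hV] := st t.1 t.2 oW n0; exists V.
  by exists set0 => oW n0; exfalso; apply: h.
have [g hg] := choice ex.
pose V := fix f n := if n is m.+1 then g (m, f m) else O.
have VS n : V n.+1 = g (n, V n) by [].
have hV n : open (V n) /\ V n !=set0.
  elim: n => [|n [oV n0]]; first by split.
  by rewrite VS; have [] := hg (n, V n) oV n0.
have hV' n : closure (V n.+1) `<=` V n `\` C n /\ compact (closure (V n.+1)).
  by rewrite VS; have [oV n0] := hV n; have [] := hg (n, V n) oV n0.
have Vdec m k : (m <= k)%N -> V k `<=` V m.
  elim: k => [|k IH]; first by rewrite leqn0 => /eqP ->.
  rewrite leq_eqVlt => /orP[/eqP -> //|mk].
  apply: subset_trans (IH mk).
  move=> y Vy; have := (hV' k).1 y (subset_closure Vy); by case.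
have [x hx] := choice (fun n => (hV n.+1).2).
have Fx : (x @ \oo) (closure (V 1)).
  apply: (@filterE nat \oo) => n; apply: subset_closure.
  have := Vdec 1%N n.+1 isT; apply; exact: hx.
have [p [_ clp]] := (hV' 0%N).2 (x @ \oo) _ Fx.
have pV m : closure (V m.+1) p.
  move: clp; rewrite clusterE => /(_ (V m.+1)); apply.
  rewrite /=; near=> n; apply: (Vdec m.+1 n.+1) => //.
  near: n; exact: nbhs_infty_ge.
have pO : O p by have := (hV' 0%N).1 p (pV 0%N); case.
exists p; split => //; apply: contrapT => nPp.
have [n _ Cnp] := PC p nPp.
by have := (hV' n).1 p (pV n); case.
Unshelve. all: by end_near.
Qed.

End LCH.

Lemma closed_map (S U : topologicalType) (f : S -> U) :
  hausdorff_space U -> locally_compact [set: U] -> proper_map f -> continuous f ->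
  forall C, closed C -> closed (f @` C).
Proof.
move=> hU lcU pf cf C clC; apply/closure_id/seteqP; split; first exact: subset_closure.
move=> x clx; apply: contrapT => nx.
have [K Kx [cK clK]] := lcU x I; rewrite withinET in Kx.
have cL : compact (f @^-1` K `&` C) by apply: compact_closedI => //; exact: pf.
have cM : compact (f @` (f @^-1` K `&` C)).
  by apply: continuous_compact => //; exact: continuous_subspaceT.
have clM := compact_closed hU cM.
have nM : nbhs x (K `&` ~` (f @` (f @^-1` K `&` C))).
  apply: filterI => //; apply: open_nbhs_nbhs; split; first exact: closed_openC.
  by move=> [c [Kc Cc] fcx]; apply: nx; exists c.
have [y [[c Cc <-] [Ky nMy]]] := clx _ nM.
by apply: nMy; exists c.
Qed.

Lemma lh_cont (S U : topologicalType) (f : S -> U) : local_homeomorphism f -> continuous f.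
Proof.
move=> lh x; have [V [oV Vx _ cV _]] := lh x.
move: cV; rewrite continuous_open_subspace // => /(_ x); apply; exact/mem_set.
Qed.

Lemma lh_open (S U : topologicalType) (f : S -> U) : local_homeomorphism f ->
  forall W, open W -> open (f @` W).
Proof.
move=> lh W oW.
have -> : f @` W = \bigcup_(x in W) f @` (W `&` (projT1 (cid (lh x)))).
  apply/seteqP; split.
    move=> _ [x Wx <-]; exists x => //; exists x => //; split => //.
    by case: (cid (lh x)) => V /= [].
  by move=> _ [x Wx [y [Wy _] <-]]; exists y.
apply: bigcup_open => x Wx; case: (cid (lh x)) => V /= [oV Vx _ _ [_ hV]].
by apply: hV; [exact: openI | exact: subIsetr].
Qed.

Lemma cnd_pre (S U : topologicalType) (f : S -> U) : continuous f ->
  (forall W, open W -> open (f @` W)) -> forall C, cnd C -> cnd (f @^-1` C).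
Proof.
move=> cf fo C [clC iC]; split; first exact: (continuous_closedP f).1.
have h : f @` (interior (f @^-1` C)) = set0.
  apply: int0 iC _ (fo _ (@open_interior _ _)) _.
  by move=> _ [x /interior_subset Cx <-].
apply/seteqP; split => // x ix.
have : (f @` interior (f @^-1` C)) (f x) by exists x.
by rewrite h.
Qed.

Lemma meagre'_pre (S U : topologicalType) (f : S -> U) : continuous f ->
  (forall W, open W -> open (f @` W)) -> forall A, meagre' A -> meagre' (f @^-1` A).
Proof.
move=> cf fo A [C [cC AC]]; exists (fun n => f @^-1` C n); split.
  by move=> n; exact: cnd_pre.
by move=> x /AC [n _ Cx]; exists n.
Qed.

Lemma enum_countable (S : Type) (s0 : S) (B : set S) : countable B ->
  exists e : nat -> S, B `<=` range e.
Proof.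
have [->|/set0P[b0 Bb0]] := eqVneq B set0; first by move=> _; exists (fun _ => s0).
move=> /countable_injP [f finj].
have ex : forall n : nat, exists b : S, (exists b', B b' /\ f b' = n) -> B b /\ f b = n.
  move=> n; have [[b' [Bb' fb']]|h] := pselect (exists b', B b' /\ f b' = n).
    by exists b' => _.
  by exists b0 => /h.
have [e he] := choice ex; exists e => b Bb; exists (f b) => //.
have [Be fe] := he (f b) (ex_intro _ b (conj Bb erefl)).
by apply: finj; rewrite ?inE.
Qed.

Section Proj.
Variables (X X' : topologicalType) (pi : X' -> X).
Hypotheses (hX : hausdorff_space X) (lcX : locally_compact [set: X])
  (ppi : proper_map pi) (cpi : continuous pi) (spi : set_surj [set: X'] [set: X] pi).
Let X0 := [set x' : X' | pi @^-1` [set pi x'] = [set x']].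
Hypothesis dX0 : dense X0.

Lemma key_sub (C W : set X') : closed C -> open W -> W `<=` pi @^-1` (pi @` C) -> W `<=` C.
Proof.
move=> clC oW WC w Ww; apply: contrapT => nCw.
have oWC : open (W `\` C) by apply: openI => //; exact: closed_openC.
have [z [[Wz nCz] X0z]] := dX0 (ex_intro _ w (conj Ww nCw)) oWC.
have [c Cc pc] := WC z Wz.
have : (pi @^-1` [set pi z]) c by [].
by rewrite X0z => cz; apply: nCz; rewrite -cz.
Qed.

Lemma cnd_sat (C : set X') : cnd C -> cnd (pi @^-1` (pi @` C)).
Proof.
move=> [clC iC]; split.
  by apply: (continuous_closedP pi).1 => //; exact: closed_map.
apply: int0 iC _ (@open_interior _ _) _.
by apply: key_sub => //; [exact: open_interior | exact: interior_subset].
Qed.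

Lemma cnd_img (C : set X') : cnd C -> cnd (pi @` C).
Proof.
move=> cC; have [clC _] := cC; split; first exact: closed_map.
have [_ iS] := cnd_sat cC.
have h : pi @^-1` interior (pi @` C) = set0.
  apply: (int0 iS); first by apply: open_comp; [move=> x _; exact: cpi | exact: open_interior].
  by move=> x /interior_subset.
apply/seteqP; split => // y iy.
have [x _ pxy] := spi (I : [set: X] y).
have : (pi @^-1` interior (pi @` C)) x by rewrite /= pxy.
by rewrite h.
Qed.

Lemma meagre'_img (A : set X') : meagre' A -> meagre' (pi @` A).
Proof.
move=> [C [cC AC]]; exists (fun n => pi @` C n); split.
  by move=> n; exact: cnd_img.
by move=> _ [x /AC [n _ Cx] <-]; exists n => //; exists x.
Qed.

Lemma meagre'_sat (A : set X') : meagre' A -> meagre' (pi @^-1` (pi @` A)).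
Proof.
move=> [C [cC AC]]; exists (fun n => pi @^-1` (pi @` C n)); split.
  by move=> n; exact: cnd_sat.
move=> y [x /AC [n _ Cx] pxy]; exists n => //; exists x => //.
Qed.

Hypotheses (scX' : @second_countable X') (hX' : hausdorff_space X')
  (lcX' : locally_compact [set: X']).

Lemma meagre_N : meagre' (~` X0).
Proof.
have [B cB bB] := scX'.
have [e he] := enum_countable set0 cB.
pose D i j := if pselect (closure (e i) `&` closure (e j) = set0) is left _ then
  closure (e i) `&` pi @^-1` (pi @` closure (e j)) else set0.
have cndD i j : cnd (D i j).
  rewrite /D; case: pselect => [dij|_]; last exact: cnd0.
  split.
    apply: closedI; first exact: closed_closure.
    apply: (continuous_closedP pi).1 => //; apply: closed_map => //.
    exact: closed_closure.
  apply/seteqP; split => // w Ww.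
  have [z [Wz X0z]] := dX0 (ex_intro _ w Ww) (@open_interior _ _).
  have [zi [c cj pc]] := interior_subset Wz.
  have : (pi @^-1` [set pi z]) c by [].
  rewrite X0z => cz; rewrite cz in cj.
  by have : (closure (e i) `&` closure (e j)) z by []; rewrite dij.
apply: (meagre'_sub (B := \bigcup_i \bigcup_j D i j)); last first.
  by apply: meagre'_bigcup => i; apply: meagre'_bigcup => j; exact: meagre'_cnd.
move=> x nX0x.
have [y pyx yx] : exists2 y, pi y = pi x & y != x.
  apply: contrapT => h; apply: nX0x; apply/seteqP; split.
    move=> y pyx; apply: contrapT => nyx; apply: h; exists y => //.
    by apply/eqP.
  by move=> _ ->.
move: hX'; rewrite open_hausdorff => /(_ x y); rewrite eq_sym => /(_ yx).
move=> [[U V] /= [Ux Vy] [oU oV /eqP UV]].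
rewrite inE in Ux; rewrite inE in Vy.
have [b1 [Bb1 b1x cb1 _]] := basis_reg hX' lcX' bB oU Ux.
have [b2 [Bb2 b2y cb2 _]] := basis_reg hX' lcX' bB oV Vy.
have [i _ ei] := he b1 Bb1; have [j _ ej] := he b2 Bb2.
exists i => //; exists j => //; rewrite /D; case: pselect => [_|nd].
  split; first by rewrite ei; exact: subset_closure.
  by exists y => //; rewrite ej; exact: subset_closure.
exfalso; apply: nd; apply/seteqP; split => // z [zi zj].
have : (U `&` V) z by split; [apply: cb1; rewrite -ei | apply: cb2; rewrite -ej].
by rewrite UV.
Qed.

End Proj.

Lemma meagre'_img_lh (S : topologicalType) (f : S -> S) :
  @second_countable S -> hausdorff_space S -> locally_compact [set: S] ->
  local_homeomorphism f -> forall A, meagre' A -> meagre' (f @` A).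
Proof.
move=> [B cB bB] hS lcS lh A [C [cC AC]].
have [e he] := enum_countable set0 cB.
have cf := lh_cont lh.
pose good i := exists U, [/\ open U, set_inj U f, closure (e i) `<=` U & compact (closure (e i))].
pose K i := if pselect (good i) is left _ then closure (e i) else set0.
have Kcov x : exists i, K i x.
  have [U [oU Ux _ _ [iU _]]] := lh x.
  have [b [Bb bx cbU cpb]] := basis_reg hS lcS bB oU Ux.
  have [i _ eib] := he b Bb; exists i; rewrite /K.
  case: pselect => [_|ng]; first by rewrite eib; exact: subset_closure.
  by exfalso; apply: ng; exists U; rewrite eib.
have cndK n i : cnd (f @` (K i `&` C n)).
  rewrite /K; case: pselect => [[U [oU iU KU cK]]|_]; last first.
    by rewrite set0I image_set0; exact: cnd0.
  have [clC iC] := cC n.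
  have cD : compact (closure (e i) `&` C n) by exact: compact_closedI.
  have cI : compact (f @` (closure (e i) `&` C n)).
    by apply: continuous_compact => //; exact: continuous_subspaceT.
  split; first exact: compact_closed.
  set W := interior _.
  have oW : open W by exact: open_interior.
  have W'C : U `&` f @^-1` W `<=` C n.
    move=> u [Uu /interior_subset [d [Kd Cd] fdu]].
    by have <- : d = u by apply: iU; rewrite ?inE //; exact: KU.
  have W'0 := int0 iC (openI oU (open_comp (fun x _ => cf x) oW)) W'C.
  apply/seteqP; split => // w Ww.
  have [d [Kd Cd] fdw] := interior_subset Ww.
  have : (U `&` f @^-1` W) d by split; [exact: KU | rewrite /= fdw].
  by rewrite W'0.
apply: (meagre'_sub (B := \bigcup_n \bigcup_i f @` (K i `&` C n))).
  move=> _ [x /AC [n _ Cx] <-]; exists n => //.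
  by have [i Ki] := Kcov x; exists i => //; exists x.
apply: meagre'_bigcup => n; apply: meagre'_bigcup => i.
exact: meagre'_cnd.
Qed.

Unset Implicit Arguments.
Set Strict Implicit.

Theorem corollary4p13 (X X' : topologicalType)
    (T : X -> X) (T' : X' -> X') (pi : X' -> X) :
  @second_countable X -> locally_compact [set: X] -> hausdorff_space X ->
  @second_countable X' -> locally_compact [set: X'] -> hausdorff_space X' ->
  local_homeomorphism T' ->
  continuous T -> locally_injective T ->
  proper_map pi -> continuous pi -> set_surj [set: X'] [set: X] pi ->
  pi \o T' = T \o pi ->
  ((exists S : set X,
      [/\ T @^-1` S = S, comeagre S, comeagre (pi @^-1` S)
        & set_bij (pi @^-1` S) S pi])
   <->
   dense [set x' : X' | pi @^-1` [set pi x'] = [set x']]).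
Proof.
move=> scX lcX hX scX' lcX' hX' lhT' cT liT ppi cpi spi comm.
split.
  move=> [S [_ _ cS' [_ inj _]]].
  have dP : dense (pi @^-1` S).
    apply: baire_lch => //; exact/meagreP.
  move=> O O0 oO; have [z [Oz Pz]] := dP O O0 oO; exists z; split => //.
  apply/seteqP; split; last by move=> _ ->.
  move=> y pyz; apply: inj; rewrite ?inE //=.
  by rewrite /= pyz.
move=> dX0.
pose Y (x : X) := forall a b, pi a = x -> pi b = x -> a = b.
pose G (x : X) := exists m n y, iter n T x = iter m T y /\ ~ Y y.
have commx x : pi (T' x) = T (pi x) by have := congr1 (fun h => h x) comm.
have commn n x : pi (iter n T' x) = iter n T (pi x).
  by elim: n => [|n IH] //=; rewrite commx IH.
have GT x : G (T x) <-> G x.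
  split.
    move=> [m [n [y [e nY]]]]; exists m, n.+1, y; split => //.
    by rewrite iterSr.
  move=> [m [n [y [e nY]]]]; exists m.+1, n, y; split => //.
  by rewrite -iterSr iterS e.
have meagreZ : meagre' (pi @^-1` G).
  pose N := ~` [set x' : X' | pi @^-1` [set pi x'] = [set x']].
  have mN : meagre' N by exact: meagre_N.
  have cT' := lh_cont lhT'; have oT' := lh_open lhT'.
  have mimg m : meagre' (iter m T' @` N).
    elim: m => [|m IH].
      by apply: meagre'_sub mN => _ [x Nx <-].
    apply: meagre'_sub (meagre'_img_lh scX' hX' lcX' lhT' IH).
    by move=> _ [x Nx <-]; exists (iter m T' x) => //; exists x.
  have mpre n A : meagre' A -> meagre' (iter n T' @^-1` A).
    elim: n A => [|n IH] A mA; first by apply: meagre'_sub mA.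
    apply: meagre'_sub (meagre'_pre cT' oT' (IH _ mA)).
    by move=> x; change (A (iter n.+1 T' x) -> A (iter n T' (T' x))); rewrite iterSr.
  apply: (meagre'_sub (B := \bigcup_m \bigcup_n
     iter n T' @^-1` (pi @^-1` (pi @` (iter m T' @` N))))); last first.
    apply: meagre'_bigcup => m; apply: meagre'_bigcup => n.
    by apply: mpre; apply: meagre'_sat => //; exact: mimg.
  move=> x' [m [n [y [e nY]]]].
  have [y' _ py'] := spi y I.
  exists m => //; exists n => //=.
  exists (iter m T' y'); first exists y' => //.
    move=> X0y'; apply: nY => a b pa pb.
    have : (pi @^-1` [set pi y']) a by rewrite /= pa py'.
    have : (pi @^-1` [set pi y']) b by rewrite /= pb py'.
    by rewrite X0y' => -> ->.
  by rewrite !commn py' e.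
exists (~` G); split.
- apply/seteqP; split => x /=.
    by move=> nG Gx; apply: nG; exact/GT.
  by move=> nG /GT.
- rewrite /comeagre setCK; apply/meagreP.
  apply: meagre'_sub (meagre'_img hX lcX ppi cpi spi dX0 meagreZ).
  by move=> y Gy; have [x _ pxy] := spi y I; exists x => //; rewrite /= pxy.
- rewrite /comeagre; apply/meagreP; apply: meagre'_sub meagreZ.
  by move=> x /= nnG; apply: contrapT.
- split.
  + by move=> x.
  + move=> a b; rewrite !inE /= => nGa nGb pab.
    have Ya : Y (pi a).
      apply: contrapT => nY; apply: nGa; exists 0%N, 0%N, (pi a); split => //.
    by apply: Ya.
  + by move=> y nGy; have [x _ pxy] := spi y I; exists x => //; rewrite /= pxy.
Qed.
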